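(* Let $G$ be a connected graph that is not isomorphic to a path. Let $u$ be a pendant vertex of $G$ adjacent to a cut-vertex $v$ with $\deg(v)=2$. Then $u$ is not a basis forced vertex of $G$.
   Context: All graphs are finite and simple. A pendant is a vertex with exactly one neighbour; a cut-vertex is a vertex $v$ such that $G-v$ is disconnected. For vertices $x,y$ of a connected graph $G$, $d(x,y)$ is the length of a shortest $x$–$y$ path. A set $R\subseteq V(G)$ is a resolving set if for all distinct $x,y\in V(G)$ there is $r\in R$ with $d(r,x)\neq d(r,y)$. The metric dimension $\dim(G)$ is the minimum cardinality of a resolving set, and a resolving set of cardinality $\dim(G)$ is a metric basis. A vertex is a basis forced vertex if it belongs to every metric basis of $G$. *)

(* Defs.v *)
From mathcomp Require Import all_boot.
Set Implicit Arguments. Unset Strict Implicit. Unset Printing Implicit Defensive.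

Section Graphs.
Variable T : finType.
Implicit Types (e : rel T) (x y u v : T).

Definition simple_graph e : Prop := symmetric e /\ irreflexive e.

Definition connected_graph e : Prop := forall x y, connect e x y.

Definition walk_of_len e x y (n : nat) : bool :=
  [exists p : n.-tuple T, path e x p && (last x p == y)].

(* d(x,y): the length of a shortest x-y walk (= shortest path); in a
   connected graph on #|T| vertices this is < #|T|, so searching
   lengths 0..#|T|-1 suffices. *)
Definition dist e x y : nat :=
  find (walk_of_len e x y) (iota 0 #|T|).

Definition neighbours e x : {set T} := [set y | e x y].
Definition deg e x : nat := #|neighbours e x|.

Definition pendant e u : Prop := deg e u = 1.

Definition del_vertex e v : rel T := [rel a b | [&& e a b, a != v & b != v]].

Definition cut_vertex e v : Prop :=
  exists x y, [/\ x != v, y != v & ~~ connect (del_vertex e v) x y].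

Definition resolving e (R : {set T}) : Prop :=
  forall x y, x != y -> exists2 r, r \in R & dist e r x != dist e r y.

Definition metric_basis e (B : {set T}) : Prop :=
  resolving e B /\ forall S : {set T}, resolving e S -> #|B| <= #|S|.

Definition basis_forced e u : Prop :=
  forall B : {set T}, metric_basis e B -> u \in B.

Definition is_path_graph e : Prop :=
  exists f : T -> nat, [/\ injective f, forall x, f x < #|T| &
    forall x y, e x y = ((f x == (f y).+1) || (f y == (f x).+1))].

End Graphs.

(* Main.v *)
Require Import Defs.
From mathcomp Require Import all_boot zify.
Section Dsec.
Set Implicit Arguments.
Variable T : finType.
Variable e : rel T.
Hypothesis conn : connected_graph e.

Lemma walkP x y n : reflect (exists p : seq T, [/\ size p = n, path e x p & last x p = y])
  (walk_of_len e x y n).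
Proof.
apply: (iffP existsP) => [[p /andP[Hp /eqP Hl]] | [p [Hs Hp Hl]]].
  by exists (val p); rewrite size_tuple.
subst n; exists (in_tuple p); by rewrite /= Hp Hl eqxx.
Qed.

Lemma walk_lt x y : exists2 n, n < #|T| & walk_of_len e x y n.
Proof.
have /connectP[p Hp ->] := conn x y.
case: (shortenP Hp) => p' Hp' Hu _.
exists (size p'); last by apply/walkP; exists p'.
have := max_card (mem (x :: p')); rewrite (card_uniqP Hu) /=. lia.
Qed.

Lemma dist_spec x y : dist e x y < #|T| /\ walk_of_len e x y (dist e x y).
Proof.
have [n Hn Hw] := walk_lt x y.
have Hh : has (walk_of_len e x y) (iota 0 #|T|).
  by apply/hasP; exists n => //; rewrite mem_iota.
have := Hh; rewrite has_find size_iota => Hlt.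
split => //.
have := nth_find 0 Hh; rewrite nth_iota // add0n //.
Qed.

Lemma dist_min x y n : walk_of_len e x y n -> dist e x y <= n.
Proof.
move=> Hw; case: (leqP (dist e x y) n) => // Hlt.
have [Hd _] := dist_spec x y.
have := before_find 0 Hlt; rewrite nth_iota; last lia.
by rewrite add0n Hw.
Qed.

Lemma dist_walk x y : exists p, [/\ size p = dist e x y, path e x p & last x p = y].
Proof. by have [_ /walkP] := dist_spec x y. Qed.

Lemma dist_le x y p : path e x p -> last x p = y -> dist e x y <= size p.
Proof. by move=> Hp Hl; apply: dist_min; apply/walkP; exists p. Qed.

Lemma dist_edge x y z : e y z -> dist e x z <= (dist e x y).+1.
Proof.
move=> Hyz; have [p [Hs Hp Hl]] := dist_walk x y.
have := @dist_le x z (rcons p z); rewrite size_rcons Hs; apply.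
  by rewrite rcons_path Hp Hl.
by rewrite last_rcons.
Qed.

Lemma dist_edgeL x y z : e x y -> dist e x z <= (dist e y z).+1.
Proof.
move=> Hxy; have [p [Hs Hp Hl]] := dist_walk y z.
have := @dist_le x z (y :: p); rewrite /= Hs; apply => //.
by rewrite /= Hxy Hp.
Qed.

Lemma dist_xx x : dist e x x = 0.
Proof. by apply/eqP; rewrite -leqn0; apply: (@dist_le x x [::]). Qed.

Lemma dist_eq0 x y : dist e x y = 0 -> x = y.
Proof.
move=> H; have [p [Hs Hp Hl]] := dist_walk x y.
by case: p Hs Hp Hl => [|a q] /=; [move=> _ _ <- | rewrite H].
Qed.

Lemma dist_1 x y : dist e x y = 1 -> e x y.
Proof.
move=> H; have [p [Hs Hp Hl]] := dist_walk x y.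
case: p Hs Hp Hl => [|a [|b q]] //=; rewrite H //.
by move=> _; rewrite andbT => ? <-.
Qed.

Lemma dist_pred x y n : dist e x y = n.+1 -> exists z, e z y /\ dist e x z = n.
Proof.
move=> H; have [p [Hs Hp Hl]] := dist_walk x y.
case/lastP: p Hs Hp Hl => [|q a]; first by rewrite H.
rewrite size_rcons rcons_path last_rcons H => -[Hs] /andP[Hq He] Ha; subst a.
exists (last x q); split => //.
have H1 := @dist_le x (last x q) q Hq erefl.
have H2 := @dist_edge x _ _ He. lia.
Qed.

Lemma dist_succ x y n : dist e x y = n.+1 -> exists z, e x z /\ dist e z y <= n.
Proof.
move=> H; have [p [Hs Hp Hl]] := dist_walk x y.
case: p Hs Hp Hl => [|a q]; first by rewrite H.
rewrite /= H => -[Hs] /andP[He Hq] Hl.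
exists a; split => //. rewrite -Hs. exact: dist_le.
Qed.
End Dsec.
Lemma resolvingP (T : finType) (e : rel T) (R : {set T}) :
  reflect (resolving e R)
   [forall x, forall y, (x != y) ==> [exists r in R, dist e r x != dist e r y]].
Proof.
apply: (iffP forallP) => [H x y Hxy | H x].
  have /forallP/(_ y)/implyP/(_ Hxy)/existsP[r /andP[Hr Hd]] := H x.
  by exists r.
apply/forallP => y; apply/implyP => Hxy.
by have [r Hr Hd] := H x y Hxy; apply/existsP; exists r; rewrite Hr.
Qed.

Theorem theorem4 (T : finType) (e : rel T) (u v : T) :
  simple_graph e -> connected_graph e -> ~ is_path_graph e ->
  pendant e u -> e u v -> cut_vertex e v -> deg e v = 2 ->
  ~ basis_forced e u.
Proof.
move=> [sym irr] conn npath pu euv _ dv Hf.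
have setT_res : [forall x, forall y, (x != y) ==> [exists r in [set: T], dist e r x != dist e r y]].
  apply/resolvingP => x y Hxy; exists x; rewrite ?inE // (dist_xx conn) //.
  by apply/eqP => /esym /(dist_eq0 conn _ _) /eqP; rewrite (negbTE Hxy).
case: (@arg_minnP _ [set: T] (fun R : {set T} => [forall x, forall y, (x != y) ==> [exists r in R, dist e r x != dist e r y]]) (fun S : {set T} => #|S|) setT_res) => B /resolvingP HB Hmin.
have HBm : forall S : {set T}, resolving e S -> #|B| <= #|S|.
  by move=> S /resolvingP /Hmin.
have uB := Hf B (conj HB HBm).
have Nu : forall z, e u z -> z = v.
  move: pu; rewrite /pendant /deg => /eqP /cards1P [a Ha] z Hz.
  have : v \in neighbours e u by rewrite inE.
  have : z \in neighbours e u by rewrite inE.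
  by rewrite Ha !inE => /eqP -> /eqP ->.
have evu : e v u by rewrite sym.
have uv : u != v by apply/eqP => E; move: euv; rewrite E irr.
have [w [evw wu Nv]] : exists w, [/\ e v w, w != u & forall z, e v z -> z = u \/ z = w].
  have : #|neighbours e v :\ u| == 1.
    move: (cardsD1 u (neighbours e v)); rewrite -/(deg e v) dv inE evu. move=> H. apply/eqP. lia.
  move=> /cards1P [w Hw].
  have : w \in neighbours e v :\ u by rewrite Hw inE.
  rewrite !inE => /andP [wu evw]; exists w; split => // z Hz.
  case: (z =P u) => [|/eqP zu]; first by left.
  right; have : z \in neighbours e v :\ u by rewrite !inE zu.
  by rewrite Hw inE => /eqP.
have wv : w != v by apply/eqP => E; move: evw; rewrite E irr.
have A : forall x, x != u -> dist e u x = (dist e v x).+1.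
  move=> x xu; have H1 := dist_edgeL conn u v x euv.
  case Hd: (dist e u x) => [|n].
    by move: Hd => /(dist_eq0 conn _ _) E; move: xu; rewrite E eqxx.
  have [z [Hz Hz2]] := dist_succ conn _ _ Hd.
  rewrite (Nu z Hz) in Hz2. lia.
have C : forall b, b != u -> dist e b u = (dist e b v).+1.
  move=> b bu; have H1 := dist_edge conn b v u evu.
  case Hd: (dist e b u) => [|n].
    by move: Hd => /(dist_eq0 conn _ _) E; move: bu; rewrite E eqxx.
  have [z [Hz Hz2]] := dist_pred conn _ _ Hd.
  have ez : e u z by rewrite sym.
  rewrite (Nu z ez) in Hz2. lia.
have D : forall b, b != u -> b != v -> dist e b v = (dist e b w).+1.
  move=> b bu bv.
  case Hd: (dist e b v) => [|n].
    by move: Hd => /(dist_eq0 conn _ _) E; move: bv; rewrite E eqxx.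
  have [z [Hz Hz2]] := dist_pred conn _ _ Hd.
  have ez : e v z by rewrite sym.
  case: (Nv z ez) => Ez; subst z; [have := C b bu; clear -Hz2 Hd; lia | clear -Hz2 Hd; lia].
have K : forall B' : {set T}, u \notin B' -> B :\ u \subset B' -> v \in B' ->
    (exists b, [/\ b \in B', b != u & b != v]) -> resolving e B'.
  move=> B' uB' sB' vB' [b [bB' bu bv]].
  have Hu : forall y, y != u -> exists2 r, r \in B' & dist e r u != dist e r y.
    move=> y yu.
    case: (y =P v) => [->|/eqP yv].
      exists v => //; rewrite (dist_xx conn) //; apply/eqP => /(dist_eq0 conn _ _) E.
      by move: uv; rewrite E eqxx.
    case: (y =P w) => [->|/eqP yw].
      exists b => //; rewrite (C b bu) (D b bu bv). clear; lia.
    exists v => //.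
    have H1 := dist_edge conn v v u evu; rewrite (dist_xx conn) // in H1.
    have H2 : dist e v u != 0.
      by apply/eqP => /(dist_eq0 conn _ _) E; move: uv; rewrite E eqxx.
    have H3 : dist e v y != 1.
      apply/eqP => /(dist_1 conn _ _) /Nv [] E; [by move: yu; rewrite E eqxx|by move: yw; rewrite E eqxx].
    clear -H1 H2 H3; lia.
  move=> x y Hxy.
  have [r Hr Hd] := HB x y Hxy.
  case: (r =P u) => [ru|/eqP ru]; last first.
    by exists r => //; apply: (subsetP sB'); rewrite !inE ru.
  subst r.
  case: (x =P u) => [Ex|/eqP xu]; first by subst x; apply: Hu; rewrite eq_sym.
  case: (y =P u) => [Ey|/eqP yu].
    subst y; have [r0 Hr0 Hd0] := Hu x xu; by exists r0; rewrite // eq_sym.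
  exists v => //; move: Hd; rewrite (A x xu) (A y yu); clear; lia.
have fin : forall a, a != u -> (v \in a |: (B :\ u)) ->
    (exists b, [/\ b \in a |: (B :\ u), b != u & b != v]) -> False.
  move=> a au vB' ex.
  have nuB' : u \notin a |: (B :\ u) by rewrite !inE eqxx /= orbF eq_sym.
  have res := K _ nuB' (subsetUr _ _) vB' ex.
  have card : #|a |: (B :\ u)| <= #|B|.
    rewrite (cardsD1 u B) uB cardsU1; apply: leq_add => //; exact: leq_b1.
  have := Hf _ (conj res (fun S HS => leq_trans card (HBm S HS))).
  by rewrite (negbTE nuB').
case: (boolP [exists b in B, (b != u) && (b != v)]) => [/existsP [b /andP [bB /andP [bu bv]]] | Hno].
  apply: (fin v); [by rewrite eq_sym | exact: setU11 | ]. exists b; split => //.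
  by rewrite !inE bu bB orbT.
case: (boolP (v \in B)) => vB.
  apply: (fin w wu); first by rewrite !inE vB (eq_sym v u) uv orbT.
  by exists w; split => //; exact: setU11.
apply: npath; exists (dist e u).
have Bu : forall r, r \in B -> r = u.
  move=> r rB; apply/eqP; apply/negPn/negP => ru.
  have rv : r != v by apply/eqP => E; move: vB; rewrite -E rB.
  by move/existsPn: Hno => /(_ r); rewrite rB ru rv.
have inj : injective (dist e u).
  move=> x y Hxy; apply/eqP; apply/negPn/negP => nxy.
  have [r Hr Hd] := HB x y nxy.
  by move: Hd; rewrite (Bu r Hr) Hxy eqxx.
split => // [x|x y]; first by have [] := dist_spec conn u x.
apply/idP/idP => [Hxy|].
  have H1 := dist_edge conn u x y Hxy.
  have eyx : e y x by rewrite sym.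
  have H2 := dist_edge conn u y x eyx.
  have H3 : dist e u x != dist e u y by apply/eqP => /inj E; move: Hxy; rewrite E irr.
  clear -H1 H2 H3; lia.
case/orP => /eqP H.
  have [z [Hz Hz2]] := dist_pred conn _ _ H.
  by move: Hz; rewrite (inj _ _ Hz2) sym.
have [z [Hz Hz2]] := dist_pred conn _ _ H.
by move: Hz; rewrite (inj _ _ Hz2).
Qed.
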